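(* In the construction below, let $P_0,\dots,P_K$ be partitions of $X$ such that every part of $P_k$ has diameter at most $\tau^{-k}$, and for $x\in X$ define $\psi_k(x):=\mathsf f_k\big(B_X(P_k(x),\tau^{-k}/2)\big)$, where $P_k(x)$ is the part of $P_k$ containing $x$. Then for every $x\in X$, $\langle(\psi_0(x),0),(\psi_1(x),1),\dots,(\psi_K(x),K)\rangle$ is a directed path in $\mathcal D$, i.e. $(\psi_k(x),\psi_{k+1}(x))\in A_k$ for all $k\in\{0,\dots,K-1\}$.
   Context: Construction. Let $(X,d)$ be a metric space with $n=|X|\ge2$ and $\mathrm{diam}(X)=1$. For $S\subseteq X$, $r\ge0$: $B_X(S,r):=\{x\in X:\exists s\in S,\ d(x,s)\le r\}$ and $B_X(x,r):=B_X(\{x\},r)$. Let $\varepsilon_0:=\min\{d(x,y):x\ne y\}$, $\tau:=12$, $K:=1+\lceil\log_\tau(1/\varepsilon_0)\rceil$. For $\eta>0$ the greedy $\eta$-net is built as: $N_0=\emptyset$; for $j\ge1$, $S_j:=X\setminus B_X(N_{j-1},\eta)$; if $S_j=\emptyset$ output $N_{j-1}$; else pick $x_j\in S_j$ maximizing $|B_X(x,\eta/3)|$ and set $N_j=N_{j-1}\cup\{x_j\}$. For $k=0,\dots,K$ let $U_k$ be the greedy $\tau^{-k}$-net. For $k<K$, $A_k$ is the set of pairs $(u,u')\in U_k\times U_{k+1}$ with (i) $d(u,u')\le4\tau^{-k}$ and (ii) $|B_X(u,\tau^{-k}/3)|\ge\max\{|B_X(w,\tau^{-k}/3)|:w\in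 B_X(u',6\tau^{-(k+1)})\}$. The directed graph $\mathcal D$ has vertex set $\{(u,k):u\in U_k,\ 0\le k\le K\}$ and arcs $((u,k),(u',k+1))$ for $(u,u')\in A_k$. For nonempty $S\subseteq X$, $\mathsf f_k(S)$ denotes a (fixed) maximizer of $|B_X(y,\tau^{-k}/3)|$ over $y\in B_X(S,2\tau^{-k})\cap U_k$. *)

(* Defs.v *)
From HB Require Import structures.
From mathcomp Require Import all_boot all_order all_algebra.
From mathcomp Require Import reals exp.
Set Implicit Arguments. Unset Strict Implicit. Unset Printing Implicit Defensive.
Import Order.TTheory GRing.Theory Num.Theory.
Local Open Scope ring_scope.

Section Defs.
Variables (R : realType) (X : finType) (d : X -> X -> R).

Definition is_metric : Prop :=
  [/\ forall x y, 0 <= d x y,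
      forall x y, d x y = 0 <-> x = y,
      forall x y, d x y = d y x &
      forall x y z, d x z <= d x y + d y z].

Definition diam_one : Prop :=
  (forall x y, d x y <= 1) /\ exists x y, d x y = 1.

Definition is_min_dist (e0 : R) : Prop :=
  (exists x y, x != y /\ d x y = e0) /\ forall x y, x != y -> e0 <= d x y.

Definition tau : R := 12%:R.

(* K = 1 + ceil(log_tau (1/e0)) ; the ceiling is >= 0 since e0 <= 1 *)
Definition Kdepth (e0 : R) : nat :=
  (1 + `|Num.ceil (ln (e0^-1) / ln tau)|)%N.

Definition ballS (S : {set X}) (r : R) : {set X} :=
  [set x | [exists s in S, d x s <= r]].
Definition ball (x : X) (r : R) : {set X} := ballS [set x] r.

(* s = [:: x_1; ...; x_m] is a run of the greedy eta-net construction: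
   each x_{j+1} lies in S_{j+1} = X \ B(N_j, eta) and maximizes |B(x, eta/3)|
   over S_{j+1}; the construction stops when S_{m+1} is empty. *)
Definition greedy_run (eta : R) (s : seq X) : Prop :=
  (forall (j : nat) (x0 : X), (j < size s)%N ->
     let N := [set y in take j s] in
     let xj := nth x0 s j in
     xj \notin ballS N eta /\
     forall y, y \notin ballS N eta -> #|ball y (eta / 3)| <= #|ball xj (eta / 3)|)%N
  /\ ballS [set y in s] eta = setT.

Definition inA (k : nat) (Uk Uk1 : {set X}) (u u' : X) : Prop :=
  [/\ u \in Uk, u' \in Uk1,
      d u u' <= 4 * tau ^- k &
      forall w, w \in ball u' (6 * tau ^- k.+1) ->
        (#|ball w (tau ^- k / 3)| <= #|ball u (tau ^- k / 3)|)%N].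

Definition is_fk (k : nat) (Uk : {set X}) (fk : {set X} -> X) : Prop :=
  forall S : {set X}, S != set0 ->
    fk S \in ballS S (2 * tau ^- k) :&: Uk /\
    forall y, y \in ballS S (2 * tau ^- k) :&: Uk ->
      (#|ball y (tau ^- k / 3)| <= #|ball (fk S) (tau ^- k / 3)|)%N.

End Defs.

(* Main.v *)
Require Import Defs.
From HB Require Import structures.
From mathcomp Require Import all_boot all_order all_algebra.
From mathcomp Require Import reals exp.
From mathcomp Require Import lra.
Import Order.TTheory GRing.Theory Num.Theory.
Local Open Scope ring_scope.

Lemma tau_pos (R : realType) (k : nat) : 0 < tau R ^- k.
Proof. by rewrite invr_gt0 exprn_gt0 // /tau ltr0n. Qed.

Lemma tau_S (R : realType) (k : nat) : tau R ^- k.+1 = tau R ^- k / 12.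
Proof.
rewrite exprSr invfM mulrC /tau; congr (_ * _).
Qed.

Lemma greedy_near (R : realType) (X : finType) (d : X -> X -> R) eta s w :
  greedy_run d eta s ->
  exists y, [/\ y \in s, d w y <= eta &
     (#|ball d w (eta / 3)| <= #|ball d y (eta / 3)|)%N].
Proof.
move=> [hg hcov].
pose Pj := fun j => w \in ballS d [set y in take j s] eta.
have exP : exists j, Pj j.
  exists (size s); rewrite /Pj take_size hcov; exact: in_setT.
case: (ex_minnP exP) => m Pm minm.
have m0 : m != 0%N.
  apply/negP => /eqP m0; move: Pm; rewrite /Pj m0 take0 inE.
  by move/existsP => [s0 /andP [] ]; rewrite inE.
have mle : (m <= size s)%N by apply: minm; rewrite /Pj take_size hcov in_setT.
case: m m0 Pm minm mle => [//|j] _ Pm minm jlt.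
have nPj : ~~ Pj j.
  apply/negP => Pj'; have := minm j Pj'; by rewrite ltnn.
have [h1 h2] := hg j w jlt.
exists (nth w s j); split.
- exact: mem_nth.
- move: Pm; rewrite /Pj (take_nth w jlt) inE => /existsP [s0 /andP [] ].
  rewrite inE mem_rcons in_cons => /orP [/eqP -> //|s0in] hs0.
  exfalso; move/negP: nPj; apply; rewrite /Pj inE; apply/existsP; exists s0.
  by rewrite inE s0in hs0.
- exact: h2.
Qed.

Lemma fk_close (R : realType) (X : finType) (d : X -> X -> R) k Uk fk (C : {set X}) x :
  is_metric d -> is_fk d k Uk fk -> x \in C ->
  (forall y z, y \in C -> z \in C -> d y z <= tau R ^- k) ->
  let u := fk (ballS d C (tau R ^- k / 2)) in
  [/\ u \in Uk, d u x <= 7 / 2 * tau R ^- k &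
    forall y, y \in Uk -> d y x <= 2 * tau R ^- k ->
      (#|ball d y (tau R ^- k / 3)| <= #|ball d u (tau R ^- k / 3)|)%N].
Proof.
move=> [d0 dxy dsym dtri] hf xC hdiam u.
have etap := tau_pos R k.
have xS : x \in ballS d C (tau R ^- k / 2).
  rewrite inE; apply/existsP; exists x; rewrite xC /=.
  have -> : d x x = 0 by apply/dxy.
  lra.
have Sne : ballS d C (tau R ^- k / 2) != set0 by apply/set0Pn; exists x.
have [uin umax] := hf _ Sne.
move: uin; rewrite inE => /andP [uB uU].
split => //.
- move: uB; rewrite inE => /existsP [s0 /andP [s0S hus0]].
  move: s0S; rewrite inE => /existsP [p /andP [pC hs0p]].
  have hpx := hdiam p x pC xC.
  have := dtri u s0 x; have := dtri s0 p x; lra.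
- move=> y yU hyx; apply: umax; rewrite inE yU andbT inE.
  by apply/existsP; exists x; rewrite xS.
Qed.

Theorem lemma3p8 (R : realType) (X : finType) (d : X -> X -> R) (e0 : R)
  (U : nat -> seq X) (f : nat -> {set X} -> X) (P : nat -> {set {set X}}) :
  is_metric d -> (1 < #|X|)%N -> diam_one d -> is_min_dist d e0 ->
  (* U_k is the greedy tau^-k-net, for k = 0..K *)
  (forall k, (k <= Kdepth e0)%N -> greedy_run d (tau R ^- k) (U k)) ->
  (* f_k is a fixed choice of maximizer, for k = 0..K *)
  (forall k, (k <= Kdepth e0)%N -> is_fk d k [set u in U k] (f k)) ->
  (* P_0..P_K are partitions of X whose parts have diameter <= tau^-k *)
  (forall k, (k <= Kdepth e0)%N ->
     partition (P k) [set: X] /\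
     forall C, C \in P k -> forall y z, y \in C -> z \in C -> d y z <= tau R ^- k) ->
  let psi k x := f k (ballS d (pblock (P k) x) (tau R ^- k / 2)) in
  forall x : X, forall k, (k < Kdepth e0)%N ->
    inA d k [set u in U k] [set u in U k.+1] (psi k x) (psi k.+1 x).
Proof.
move=> hm _ _ _ hU hF hP psi x k hk.
have hm' := hm; case: hm' => [d0 dxy dsym dtri].
have lev j : (j <= Kdepth e0)%N ->
  [/\ psi j x \in [set u in U j], d (psi j x) x <= 7 / 2 * tau R ^- j &
    forall y, y \in [set u in U j] -> d y x <= 2 * tau R ^- j ->
      (#|ball d y (tau R ^- j / 3)| <= #|ball d (psi j x) (tau R ^- j / 3)|)%N].
  move=> hj; have [hpart hdiam] := hP j hj.
  have cov : x \in cover (P j).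
    by move: hpart => /and3P [/eqP -> _ _]; exact: in_setT.
  have xin : x \in pblock (P j) x by rewrite mem_pblock.
  exact: (@fk_close R X d j _ (f j) (pblock (P j) x) x hm (hF j hj) xin (hdiam _ (pblock_mem cov))).
have [u1 du1 max1] := lev k (ltnW hk).
have [u2 du2 _] := lev k.+1 hk.
have etap := tau_pos R k.
have eS := tau_S R k.
split => //.
- have := dtri (psi k x) x (psi k.+1 x); rewrite (dsym x).
  move: du1 du2 etap; rewrite eS.
  move: (tau R ^- k) (d (psi k x) x) (d (psi k.+1 x) x) (d (psi k x) (psi k.+1 x)).
  move=> a b c e; clear; lra.
- move=> w; rewrite inE => /existsP [s0 /andP [] ]; rewrite inE => /eqP -> hw.
  have [y [yU hwy hcnt]] := @greedy_near R X d _ _ w (hU k (ltnW hk)).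
  apply: (leq_trans hcnt); apply: max1; first by rewrite inE.
  have := dtri y w x; have := dtri w (psi k.+1 x) x; rewrite (dsym y w).
  move: du2 hw hwy etap; rewrite !eS.
  move: (tau R ^- k) (d (psi k.+1 x) x) (d w (psi k.+1 x)) (d w y) (d y x) (d w x).
  move=> a b c e g h; clear; lra.
Qed.
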